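(* Assume (F) and (H), let $\varepsilon>0$, and let $c$ be an admissible speed. Then: - $c\ge0$; - $cv+h(v)-F(v)>0$ for every $v\in(0,1)$, where $F(v)=\int_0^v f(s)\,ds$; - the solution $y$ of (P1) satisfies $y(v)\le\sqrt{\varepsilon^2+(cv+h(v)-F(v))^2}-\varepsilon$ on $[0,1]$; - consequently $c\ge\sup_{v\in(0,1]}\frac{F(v)-h(v)}{v}$.
   Context: Assumptions. - (F): $f\in C([0,1])$, $f(0)=f(1)=0$, $f(s)>0$ for $s\in(0,1)$, and there is $k>0$ with $f(s)\le ks$ and $f(s)\le k(1-s)$ for all $s\in[0,1]$. - (H): $h\in C^2([0,1])$ with $h(0)=h'(0)=0$. Problem (P1): $y'=(c+h'(v))\frac{\sqrt{y(2\varepsilon+y)}}{\varepsilon+y}-f(v)$ on $[0,1]$, $y(0)=y(1)=0$, $y>0$ on $(0,1)$. A speed $c\in\mathbb R$ is admissible if (P1) has a solution. *)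

(* Defs.v *)
From Stdlib Require Import Reals Lra.
From Coquelicot Require Import Coquelicot.
Open Scope R_scope.

Definition I01 (x : R) : Prop := 0 <= x <= 1.

Definition cont_on01 (g : R -> R) : Prop :=
  forall x, I01 x -> filterlim g (within I01 (locally x)) (locally (g x)).

Definition HypF (f : R -> R) : Prop :=
  cont_on01 f /\ f 0 = 0 /\ f 1 = 0 /\
  (forall s, 0 < s < 1 -> 0 < f s) /\
  exists k, 0 < k /\ forall s, I01 s -> f s <= k * s /\ f s <= k * (1 - s).

(* Assumption (H): h in C^2([0,1]) with derivatives dh, d2h
   (derivatives on (0,1) extending continuously to [0,1]),
   h(0) = h'(0) = 0. *)
Definition HypH (h dh d2h : R -> R) : Prop :=
  cont_on01 h /\ cont_on01 dh /\ cont_on01 d2h /\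
  (forall v, 0 < v < 1 -> is_derive h v (dh v) /\ is_derive dh v (d2h v)) /\
  h 0 = 0 /\ dh 0 = 0.

Definition rhsP1 (f dh : R -> R) (eps c v y : R) : R :=
  (c + dh v) * sqrt (y * (2 * eps + y)) / (eps + y) - f v.

Definition SolP1 (f dh : R -> R) (eps c : R) (y : R -> R) : Prop :=
  cont_on01 y /\
  (forall v, 0 < v < 1 -> is_derive y v (rhsP1 f dh eps c v (y v))) /\
  y 0 = 0 /\ y 1 = 0 /\ (forall v, 0 < v < 1 -> 0 < y v).

Definition admissible (f dh : R -> R) (eps c : R) : Prop :=
  exists y, SolP1 f dh eps c y.

Definition Fprim (f : R -> R) (v : R) : R := RInt f 0 v.

(* Main.v *)
Require Import Defs.
From Stdlib Require Import Reals Lra Psatz.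
From Coquelicot Require Import Coquelicot.
Open Scope R_scope.

Definition clamp x := Rmax 0 (Rmin 1 x).
Lemma clamp_id x : I01 x -> clamp x = x.
Proof. unfold I01, clamp, Rmax, Rmin; intros; repeat destruct Rle_dec; lra. Qed.
Lemma clamp_I01 x : I01 (clamp x).
Proof. unfold I01, clamp, Rmax, Rmin; repeat destruct Rle_dec; lra. Qed.
Lemma clamp_lip a b : Rabs (clamp a - clamp b) <= Rabs (a - b).
Proof. unfold clamp, Rmax, Rmin; repeat destruct Rle_dec;
  unfold Rabs; repeat destruct Rcase_abs; lra. Qed.

Lemma clamp_cont g : cont_on01 g -> forall x, continuous (fun t => g (clamp t)) x.
Proof.
  intros Hg x. unfold continuous.
  apply (filterlim_comp _ _ _ clamp g _ (within I01 (locally (clamp x)))).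
  - intros P [e He]. exists e. intros t Ht.
    apply He; [|apply clamp_I01]. change (Rabs (clamp t - clamp x) < e).
    eapply Rle_lt_trans; [apply clamp_lip|]. exact Ht.
  - apply Hg, clamp_I01.
Qed.

Lemma clamp_loc x : 0 < x < 1 -> locally x (fun t => clamp t = t).
Proof.
  intros Hx. assert (He : 0 < Rmin x (1 - x)) by (apply Rmin_glb_lt; lra).
  exists (mkposreal _ He). intros t Ht. change (Rabs (t - x) < Rmin x (1-x)) in Ht.
  apply clamp_id. pose proof (Rmin_l x (1-x)). pose proof (Rmin_r x (1-x)).
  unfold I01. unfold Rabs in Ht; destruct Rcase_abs; lra.
Qed.

Lemma mvt_pos (g dg : R -> R) v : 0 < v ->
  (forall x, 0 < x < v -> is_derive g x (dg x)) ->
  (forall x, 0 <= x <= v -> continuity_pt g x) ->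
  (forall x, 0 < x < v -> 0 < dg x) -> g 0 < g v.
Proof.
  intros Hv Hd Hc Hp.
  set (df := fun x => if Rlt_dec 0 x then if Rlt_dec x v then dg x else 1 else 1).
  destruct (MVT_gen g 0 v df) as [c [Hcc Heq]].
  - rewrite Rmin_left, Rmax_right by lra. intros x Hx. unfold df.
    destruct Rlt_dec; [destruct Rlt_dec|]; try lra. apply Hd; lra.
  - rewrite Rmin_left, Rmax_right by lra. exact Hc.
  - assert (0 < df c). { unfold df. destruct Rlt_dec; [destruct Rlt_dec|]; try lra. apply Hp; lra. }
    assert (0 < df c * (v - 0)) by (apply Rmult_lt_0_compat; lra). lra.
Qed.

Lemma Ft_der f : cont_on01 f -> forall x,
  is_derive (fun t => RInt (fun s => f (clamp s)) 0 t) x (f (clamp x)).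
Proof.
  intros Hf x. apply (is_derive_RInt (V:=R_CompleteNormedModule) (fun s => f (clamp s)) (fun t => RInt (fun s => f (clamp s)) 0 t) 0).
  - apply filter_forall. intros b. apply RInt_correct.
    apply ex_RInt_continuous. intros z _. apply clamp_cont, Hf.
  - apply clamp_cont, Hf.
Qed.

Lemma Ft_eq f v : I01 v -> RInt (fun s => f (clamp s)) 0 v = Fprim f v.
Proof.
  intros Hv. unfold Fprim. apply RInt_ext. intros x Hx.
  rewrite Rmin_left, Rmax_right in Hx by (unfold I01 in Hv; lra).
  apply f_equal, clamp_id. unfold I01 in *; lra.
Qed.

Lemma der_loc (g : R -> R) (dg : R) x : 0 < x < 1 -> is_derive g x dg ->
  is_derive (fun t => g (clamp t)) x dg.
Proof.
  intros Hx Hd. apply is_derive_ext_loc with g; [|exact Hd].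
  generalize (clamp_loc x Hx). apply filter_imp. intros t ->. reflexivity.
Qed.

Lemma isd_plus (f g : R->R) x df dg : is_derive f x df -> is_derive g x dg ->
  is_derive (fun t => f t + g t) x (df + dg).
Proof. intros H1 H2. exact (is_derive_plus _ _ _ _ _ H1 H2). Qed.
Lemma isd_minus (f g : R->R) x df dg : is_derive f x df -> is_derive g x dg ->
  is_derive (fun t => f t - g t) x (df - dg).
Proof. intros H1 H2. exact (is_derive_minus _ _ _ _ _ H1 H2). Qed.
Lemma isd_mult (f g : R->R) x df dg : is_derive f x df -> is_derive g x dg ->
  is_derive (fun t => f t * g t) x (df * g x + f x * dg).
Proof. intros H1 H2. exact (is_derive_mult _ _ _ _ _ H1 H2 Rmult_comm). Qed.
Lemma isd_const (a : R) x : is_derive (fun _ => a) x 0.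
Proof. exact (is_derive_const a x). Qed.
Lemma isd_id x : is_derive (fun t => t) x 1.
Proof. exact (is_derive_id x). Qed.
Lemma isd_sqrt (f : R->R) x df : is_derive f x df -> 0 < f x ->
  is_derive (fun t => sqrt (f t)) x (df / (2 * sqrt (f x))).
Proof. intros H1 H2. exact (is_derive_sqrt _ _ _ H1 H2). Qed.

Lemma cnt_plus (f g : R->R) x : continuous f x -> continuous g x -> continuous (fun t => f t + g t) x.
Proof. intros H1 H2. exact (continuous_plus _ _ _ H1 H2). Qed.
Lemma cnt_minus (f g : R->R) x : continuous f x -> continuous g x -> continuous (fun t => f t - g t) x.
Proof. intros H1 H2. exact (continuous_minus _ _ _ H1 H2). Qed.
Lemma cnt_mult (f g : R->R) x : continuous f x -> continuous g x -> continuous (fun t => f t * g t) x.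
Proof. intros H1 H2. exact (continuous_mult _ _ _ H1 H2). Qed.
Lemma cnt_const (a : R) (x : R) : continuous (fun _ => a) x.
Proof. exact (continuous_const a x). Qed.
Lemma cnt_id x : continuous (fun t : R => t) x.
Proof. exact (continuous_id x). Qed.
Lemma cnt_sqrt (f : R->R) x : continuous f x -> 0 <= f x -> continuous (fun t => sqrt (f t)) x.
Proof. intros H1 H2. apply (continuous_comp f sqrt); [exact H1|].
  apply continuity_pt_filterlim, continuity_pt_sqrt, H2. Qed.
Lemma Ft_cont f : cont_on01 f -> forall x, continuous (fun t => RInt (fun s => f (clamp s)) 0 t) x.
Proof. intros Hf x. exact (ex_derive_continuous _ _ (ex_intro _ _ (Ft_der f Hf x))). Qed.

Lemma isd_lin (c x : R) : is_derive (fun t => c*t) x (c*1).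
Proof. replace (c*1) with (0 * x + c * 1) by ring.
  apply (isd_mult (fun _ => c) (fun t => t)); [apply isd_const| apply isd_id]. Qed.

Lemma key f h dh d2h eps c y : HypF f -> HypH h dh d2h -> 0 < eps -> SolP1 f dh eps c y ->
  forall v, 0 < v < 1 -> sqrt (y v * (2*eps + y v)) < c*v + h v - Fprim f v.
Proof.
  intros [Hfc [Hf0 [Hf1 [Hfp _]]]] [Hhc [Hdhc [_ [Hder [Hh0 Hdh0]]]]] Heps [Hyc [Hyd [Hy0 [Hy1 Hyp]]]] v Hv.
  set (w := fun t => c*t + h (clamp t) - RInt (fun s => f (clamp s)) 0 t
                     - sqrt (y (clamp t) * (2*eps + y (clamp t)))).
  set (yd := fun t => rhsP1 f dh eps c t (y t)).
  set (dg := fun t => c*1 + dh t - f (clamp t) - ((yd t * (2*eps + y t) + y t * (0 + yd t)) / (2 * sqrt (y t * (2*eps + y t))))).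
  assert (Hw : w 0 < w v).
  { apply (mvt_pos w dg v); [lra| | |].
    - intros x Hx. assert (Hx1 : 0 < x < 1) by lra.
      apply isd_minus; [apply isd_minus; [apply isd_plus|]|].
      + apply isd_lin.
      + apply (der_loc h). exact Hx1. apply Hder, Hx1.
      + apply Ft_der, Hfc.
      + apply (der_loc (fun t => sqrt (y t * (2*eps + y t)))). exact Hx1.
        apply (isd_sqrt (fun t => y t * (2*eps + y t))).
        * apply (isd_mult y (fun t => 2*eps + y t)). apply Hyd, Hx1. apply (isd_plus (fun _ => 2*eps) y). apply isd_const. apply Hyd, Hx1.
        * specialize (Hyp x Hx1). nra.
    - intros x Hx. apply continuity_pt_filterlim.
      apply cnt_minus; [apply cnt_minus; [apply cnt_plus|]|].
      + apply cnt_mult; [apply cnt_const| apply cnt_id].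
      + apply clamp_cont, Hhc.
      + apply Ft_cont, Hfc.
      + apply (cnt_sqrt (fun t => y (clamp t) * (2*eps + y (clamp t)))).
        * apply cnt_mult. apply clamp_cont, Hyc. apply cnt_plus. apply cnt_const. apply clamp_cont, Hyc.
        * destruct (clamp_I01 x) as [_ _].
          assert (0 <= y (clamp x)).
          { destruct (clamp_I01 x) as [H0 H1].
            destruct (Rle_lt_or_eq_dec 0 (clamp x) H0) as [Hl|He].
            - destruct (Rle_lt_or_eq_dec (clamp x) 1 H1) as [Hl'|He'].
              + left; apply Hyp; lra.
              + rewrite He', Hy1; lra.
            - rewrite <- He, Hy0; lra. }
          nra.
    - intros x Hx. assert (Hx1 : 0 < x < 1) by lra.
      unfold dg, yd, rhsP1. rewrite clamp_id by (unfold I01; lra).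
      specialize (Hyp x Hx1). specialize (Hfp x Hx1).
      set (Y := y x) in *. set (s := sqrt (Y * (2 * eps + Y))).
      assert (Hs2 : s * s = Y * (2*eps + Y)) by (apply sqrt_sqrt; nra).
      assert (Hs0 : 0 < s) by (apply sqrt_lt_R0; nra).
      assert (Hs1 : s < eps + Y) by nra.
      replace (c * 1 + dh x - f x -
  (((c + dh x) * s / (eps + Y) - f x) * (2 * eps + Y) +
   Y * (0 + ((c + dh x) * s / (eps + Y) - f x))) /
  (2 * s))
        with (f x * (eps + Y - s) / s).
      2:{ field. lra. }
      apply Rdiv_lt_0_compat; [apply Rmult_lt_0_compat|]; lra. }
  unfold w in Hw. rewrite !clamp_id in Hw by (unfold I01; lra).
  rewrite RInt_point, Hh0, Hy0, Ft_eq in Hw by (unfold I01; lra).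
  rewrite Rmult_0_l, sqrt_0 in Hw. unfold zero in Hw; simpl in Hw. lra.
Qed.

Lemma loc_eps (g : R -> R) x : continuous g x -> forall e, 0 < e ->
  exists d, 0 < d /\ forall u, Rabs (u - x) < d -> Rabs (g u - g x) < e.
Proof.
  intros Hc e He. apply continuity_pt_filterlim in Hc.
  destruct (proj1 (continuity_pt_locally g x) Hc (mkposreal e He)) as [d Hd].
  exists d. split; [apply cond_pos|]. intros u Hu. apply (Hd u). exact Hu.
Qed.

Lemma G_cont f h c : cont_on01 f -> cont_on01 h -> forall x,
  continuous (fun t => c*t + h (clamp t) - RInt (fun s => f (clamp s)) 0 t) x.
Proof.
  intros Hf Hh x. apply cnt_minus; [apply cnt_plus|].
  - apply cnt_mult; [apply cnt_const| apply cnt_id].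
  - apply clamp_cont, Hh.
  - apply Ft_cont, Hf.
Qed.

Theorem mainTheorem3 (f h dh d2h : R -> R) (eps c : R) :
  HypF f -> HypH h dh d2h -> 0 < eps -> admissible f dh eps c ->
  0 <= c /\
  (forall v, 0 < v < 1 -> c * v + h v - Fprim f v > 0) /\
  (forall y, SolP1 f dh eps c y ->
     forall v, 0 <= v <= 1 ->
       y v <= sqrt (eps ^ 2 + (c * v + h v - Fprim f v) ^ 2) - eps) /\
  Rbar_le (Lub_Rbar (fun r => exists v, 0 < v <= 1 /\ r = (Fprim f v - h v) / v))
          (Finite c).
Proof.
  intros HF HH Heps [y0 Hy0].
  pose proof HF as [Hfc [Hf0 [Hf1 [Hfp _]]]].
  pose proof HH as [Hhc [Hdhc [_ [Hder [Hh0 Hdh0]]]]].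
  assert (P2 : forall v, 0 < v < 1 -> c * v + h v - Fprim f v > 0).
  { intros v Hv. pose proof (key f h dh d2h eps c y0 HF HH Heps Hy0 v Hv).
    pose proof (sqrt_pos (y0 v * (2 * eps + y0 v))). lra. }
  split; [|split; [exact P2|split]].
  -
    destruct (Rle_or_lt 0 c) as [Hc|Hc]; [exact Hc|exfalso].
    destruct (loc_eps (fun t => dh (clamp t)) 0 (clamp_cont dh Hdhc 0) (-c/2)) as [d [Hd Hdd]]; [lra|].
    rewrite (clamp_id 0) in Hdd by (unfold I01; lra). rewrite Hdh0 in Hdd.
    set (v := Rmin (d/2) (1/2)).
    assert (Hv1 : v <= d/2) by apply Rmin_l. assert (Hv2 : v <= 1/2) by apply Rmin_r.
    assert (Hv0 : 0 < v) by (apply Rmin_glb_lt; lra).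
    set (K := fun t => RInt (fun s => f (clamp s)) 0 t - c*t - h (clamp t)).
    assert (HK : K 0 < K v).
    { apply (mvt_pos K (fun t => f (clamp t) - c*1 - dh t) v Hv0).
      - intros x Hx. assert (Hx1 : 0 < x < 1) by lra.
        apply (isd_minus (fun t => RInt (fun s => f (clamp s)) 0 t - c*t) (fun t => h (clamp t)));
          [apply (isd_minus (fun t => RInt (fun s => f (clamp s)) 0 t) (fun t => c*t))|].
        + apply Ft_der, Hfc.
        + apply isd_lin.
        + apply (der_loc h). exact Hx1. apply Hder, Hx1.
      - intros x _. apply continuity_pt_filterlim. unfold K.
        apply (cnt_minus (fun t => RInt (fun s => f (clamp s)) 0 t - c*t) (fun t => h (clamp t)));
          [apply (cnt_minus (fun t => RInt (fun s => f (clamp s)) 0 t) (fun t => c*t))|].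
        + apply Ft_cont, Hfc.
        + apply cnt_mult; [apply cnt_const| apply cnt_id].
        + apply clamp_cont, Hhc.
      - intros x Hx. assert (Hx1 : 0 < x < 1) by lra.
        rewrite clamp_id by (unfold I01; lra).
        specialize (Hfp x Hx1). specialize (Hdd x).
        rewrite clamp_id in Hdd by (unfold I01; lra).
        assert (Rabs (dh x - 0) < - c / 2) by (apply Hdd; rewrite Rminus_0_r, Rabs_pos_eq; lra).
        rewrite Rminus_0_r in H. apply Rabs_def2 in H. lra. }
    unfold K in HK. rewrite RInt_point, (clamp_id 0), (clamp_id v), Hh0, Ft_eq in HK
      by (unfold I01; lra).
    unfold zero in HK; simpl in HK.
    specialize (P2 v ltac:(lra)). lra.
  -
    intros y Hy v Hv. pose proof Hy as [_ [_ [Hy0' [Hy1' Hyp]]]].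
    set (A := c * v + h v - Fprim f v).
    destruct (Rle_lt_or_eq_dec 0 v (proj1 Hv)) as [Hl|He].
    + destruct (Rle_lt_or_eq_dec v 1 (proj2 Hv)) as [Hl'|He'].
      * pose proof (key f h dh d2h eps c y HF HH Heps Hy v ltac:(lra)) as Hk.
        fold A in Hk. specialize (Hyp v ltac:(lra)).
        set (z := sqrt (y v * (2 * eps + y v))) in *.
        assert (Hz : z * z = y v * (2*eps + y v)) by (apply sqrt_sqrt; nra).
        assert (0 <= z) by apply sqrt_pos.
        assert (eps + y v <= sqrt (eps ^ 2 + A ^ 2)).
        { rewrite <- (sqrt_square (eps + y v)) by lra. apply sqrt_le_1_alt. nra. }
        lra.
      * subst v. rewrite Hy1'.
        assert (eps <= sqrt (eps ^ 2 + A ^ 2)).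
        { rewrite <- (sqrt_pow2 eps) at 1 by lra. apply sqrt_le_1_alt. nra. }
        lra.
    + subst v. rewrite Hy0'.
      assert (eps <= sqrt (eps ^ 2 + A ^ 2)).
      { rewrite <- (sqrt_pow2 eps) at 1 by lra. apply sqrt_le_1_alt. nra. }
      lra.
  - destruct (Lub_Rbar_correct (fun r => exists v, 0 < v <= 1 /\ r = (Fprim f v - h v) / v)) as [_ Hl].
    apply Hl. intros r [v [Hv ->]]. simpl.
    destruct (Rle_lt_or_eq_dec v 1 (proj2 Hv)) as [Hl'|He'].
    + specialize (P2 v ltac:(lra)).
      apply Rmult_le_reg_r with v; [lra|].
      unfold Rdiv. rewrite Rmult_assoc, Rinv_l by lra. lra.
    + subst v. unfold Rdiv. rewrite Rinv_1, Rmult_1_r.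
      destruct (Rle_or_lt (Fprim f 1 - h 1) c) as [Hc|Hc]; [exact Hc|exfalso].
      set (G := fun t => c*t + h (clamp t) - RInt (fun s => f (clamp s)) 0 t).
      assert (HG1 : G 1 = c - (Fprim f 1 - h 1)).
      { unfold G. rewrite clamp_id, Ft_eq by (unfold I01; lra). ring. }
      destruct (loc_eps G 1 (G_cont f h c Hfc Hhc 1) (-(G 1))) as [d [Hd Hdd]]; [lra|].
      set (t := Rmax (1/2) (1 - d/2)).
      assert (Ht1 : 1/2 <= t) by apply Rmax_l. assert (Ht2 : 1 - d/2 <= t) by apply Rmax_r.
      assert (Ht3 : t < 1) by (apply Rmax_lub_lt; lra).
      specialize (Hdd t ltac:(rewrite Rabs_left; lra)).
      apply Rabs_def2 in Hdd.
      specialize (P2 t ltac:(lra)).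
      unfold G in Hdd. rewrite clamp_id, Ft_eq in Hdd by (unfold I01; lra).
      lra.
Qed.
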